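(* Let $r\ge 3$ be an integer, let $\varphi$ be an instance of Exact $r$-SAT, and let $G(\varphi)$ be the graph constructed from $\varphi$ as described in the context. If $\varphi$ is satisfiable, then $\mathrm{wcol}_r(G(\varphi)) \leq 2r-1$.
   Context: Exact $r$-SAT: given a CNF formula $\varphi$ with clauses $c_1,\dots,c_m$ over variables $x_1,\dots,x_n$ such that each clause contains exactly $r$ different variables, decide whether $\varphi$ is satisfiable. An $\ell$-subdivided edge between $a$ and $b$ is an induced path with $\ell$ internal vertices (subdivision vertices) joining $a$ and $b$, whose internal vertices have no other neighbors. Construction of $G(\varphi)$: for each clause $c_i$ create $2r$ vertices $u_i^1,\dots,u_i^{2r}$. For each variable $x_j$ create two vertices $v_j,v'_j$ (for the literals $x_j$ and $\overline{x}_j$) joined by an edge. For each clause $c_i$ containing literal $x_j$, add two $(r-2)$-subdivided edges from $v_j$ to each of $u_i^1,\dots,u_i^{2r}$; for each clause $c_i$ containing $\overline{x}_j$, add two $(r-2)$-subdivided edges from $v'_j$ to each of $u_i^1,\dots,u_i^{2r}$. Weak coloring numbers: for a graph $G=(V,E)$ and a total order $\sigma$ of $V$, a vertex $v\neq u$ is weakly $r$-reachable from $u$ if $u <_\sigma v$ and there is a $u$–$v$ path $P$ of length at most $r$ all of whose vertices other than $u,v$ precede $v$ in $\sigma$; $\mathrm{wreach}_r(u,G_\sigma)$ is the set of such $v$, and $\mathrm{wcol}_r(G)=\min_\sigma\max_u|\mathrm{wreach}_r(u,G_\sigma)|$ over all total orders $\sigma$ of $V$. *)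

(* Defs.v *)
From mathcomp Require Import all_boot.
Set Implicit Arguments. Unset Strict Implicit. Unset Printing Implicit Defensive.

(* A literal over variables x_0..x_{n-1}: (j, true) is x_j, (j, false) is ~x_j. *)
Definition lit (n : nat) := ('I_n * bool)%type.

Definition cnf (m n : nat) := 'I_m -> seq (lit n).

Definition exact_r_cnf (r m n : nat) (phi : cnf m n) : Prop :=
  forall i : 'I_m, size (phi i) = r /\ uniq (map fst (phi i)).

Definition satisfiable (m n : nat) (phi : cnf m n) : Prop :=
  exists a : 'I_n -> bool, forall i : 'I_m, has (fun l : lit n => a l.1 == l.2) (phi i).

(* A total order sigma of V is given by an injective rank function o : V -> 'I_#|V|;
   u <_sigma v  iff  o u < o v. *)

Definition wreach (V : finType) (adj : rel V) (r : nat) (o : V -> nat) (u : V) : {set V} :=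
  [set v | (o u < o v) &&
     [exists k : 'I_r.+1, exists p : k.-tuple V,
        [&& path adj u p, last u p == v, uniq (u :: p) &
            all (fun w => (w == u) || (w == v) || (o w < o v)) p]]].

(* wcol_r(G) = min over total orders of max_u |wreach_r(u)|.  (The initial value #|V|
   of the min is never attained as minimum unless equal: the range of orders is nonempty
   and every |wreach| is < #|V|.) *)
Definition wcol (V : finType) (adj : rel V) (r : nat) : nat :=
  \big[minn/#|V|]_(o : {ffun V -> 'I_#|V|} | injectiveb o)
     \max_(u : V) #|wreach adj r (fun x => nat_of_ord (o x)) u|.

(* Vertices:
   inl (inl (i,k))          : clause vertex u_i^k   (k < 2r)
   inl (inr (j,b))          : literal vertex v_j (b = true) / v'_j (b = false)
   inr ((((i,p),k),t),s)    : s-th subdivision vertex (s < r-2) of copy t (of the two)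
                              of the subdivided edge between the vertex of the p-th
                              literal of clause i (p < r) and u_i^k. *)
Definition GV (r m n : nat) : finType :=
  ((('I_m * 'I_(2 * r)) + ('I_n * bool)) +
   ('I_m * 'I_r * 'I_(2 * r) * bool * 'I_(r - 2)))%type.

Definition clause_lit (m n : nat) (phi : cnf m n) (i : 'I_m) (p : nat) : option (lit n) :=
  nth None (map Some (phi i)) p.

Definition Garc (r m n : nat) (phi : cnf m n) (x y : GV r m n) : bool :=
  match x, y with
  | inl (inr (j, b)), inl (inr (j', b')) => (j == j') && b && ~~ b'
  | inr (i, p, k, t, s), inr (i', p', k', t', s') =>
      [&& i == i', p == p', k == k', t == t' & s.+1 == s' :> nat]
  | inr (i, p, k, t, s), inl (inr l) =>
      (s == 0 :> nat) && (clause_lit phi i p == Some l)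
  | inr (i, p, k, t, s), inl (inl (i', k')) =>
      [&& s.+1 == r - 2, i == i' & k == k']
  | _, _ => false
  end.

Definition Gadj (r m n : nat) (phi : cnf m n) : rel (GV r m n) :=
  fun x y => Garc phi x y || Garc phi y x.

Arguments Garc r {m n} phi x y.
Arguments Gadj r {m n} phi x y.

(* Main.v *)
Require Import Defs.
From mathcomp Require Import all_boot zify.
Set Implicit Arguments. Unset Strict Implicit. Unset Printing Implicit Defensive.

Lemma pot_path (V : finType) (adj : rel V) (R : pred V) (f : V -> nat) :
  (forall x y, R x -> R y -> adj x y -> f x <= (f y).+1) ->
  forall p u, R u -> all R p -> path adj u p -> f u <= f (last u p) + size p.
Proof.
move=> H; elim=> [|y p IH] u Ru /=; first by rewrite addn0.
case/andP=> Ry Rp /andP[a pa].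
have := IH y Ry Rp pa; have := H u y Ru Ry a; lia.
Qed.

Lemma inv_path (V : finType) (T : eqType) (adj : rel V) (R : pred V) (g : V -> T) :
  (forall x y, R x -> R y -> adj x y -> g x = g y) ->
  forall p u, R u -> all R p -> path adj u p -> g u = g (last u p).
Proof.
move=> H; elim=> [|y p IH] u Ru //=.
case/andP=> Ry Rp /andP[a pa].
by rewrite (H u y Ru Ry a) (IH y Ry Rp pa).
Qed.

Definition lev r m n (a : 'I_n -> bool) (x : GV r m n) : nat :=
  match x with
  | inr _ => 0
  | inl (inl _) => 1
  | inl (inr (j, b)) => if a j == b then 3 else 2
  end.

Definition litv r m n (l : lit n) : GV r m n := inl (inr l).
Definition negl n (l : lit n) : lit n := (l.1, ~~ l.2).

Lemma clause_lit_mem m n (phi : cnf m n) i p l : clause_lit phi i p = Some l -> l \in phi i.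
Proof.
rewrite /clause_lit; elim: (phi i) p => [|x s IH] [|p] //=.
- by case=> ->; rewrite mem_head.
- by move/IH => H; rewrite in_cons H orbT.
Qed.

Definition fF r m n (phi : cnf m n) (lam : lit n) (x : GV r m n) : nat :=
  match x with
  | inl (inr l) => if l == lam then 0 else r.+1
  | inl (inl (i, k)) => if lam \in phi i then r - 1 else r.+1
  | inr (i, p, k, t, s) =>
      if clause_lit phi i p == Some lam then s.+1
      else if lam \in phi i then minn r.+1 (r - 1 + (r - 2 - s)) else r.+1
  end.

Lemma fF_lip r m n (phi : cnf m n) a lam (x y : GV r m n) : 3 <= r ->
  lev a x <= 2 -> lev a y <= 2 -> Garc r phi x y ->
  fF phi lam x <= (fF phi lam y).+1 /\ fF phi lam y <= (fF phi lam x).+1.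
Proof.
move=> r3.
case: x => [[[i k]|[j b]]|[[[[i p] k] t] s]];
case: y => [[[i' k']|[j' b']]|[[[[i' p'] k'] t'] s']] //=.
- move=> h1 h2 /andP[/andP[/eqP e bt] bf]; subst j'; move: bt bf h1 h2.
  by case: b; case: b' => //=; case: (a j).
- move=> _ _ /and3P[/eqP sr /eqP <- _].
  have ls := ltn_ord s.
  case: eqP => [/clause_lit_mem -> | _]; first lia.
  case: (lam \in phi i); lia.
- move=> _ _ /andP[/eqP s0 /eqP cl].
  rewrite cl s0; case: (boolP ((j', b') == lam)) => [/eqP <-|ne]; first by rewrite !eqxx; lia.
  have -> : (Some (j', b') == Some lam) = false by apply/eqP => -[] /eqP; apply/negP.
  rewrite ?(negbTE ne).
  case: (lam \in phi i); lia.
- move=> _ _ /and5P[/eqP <- /eqP <- _ _ /eqP ss].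
  have ls := ltn_ord s'.
  case: eqP => _; first lia.
  case: (lam \in phi i); lia.
Qed.

Lemma some_eq (T : eqType) (x y : T) : (Some x == Some y) = (x == y).
Proof. by []. Qed.

Lemma neglK n (l : lit n) : negl (negl l) = l.
Proof. by case: l => j b; rewrite /negl /= negbK. Qed.

Lemma negl_neq n (l : lit n) : (negl l == l) = false.
Proof. by case: l => j b; rewrite /negl xpair_eqE eqxx /=; case: b. Qed.

Definition fT r m n (phi : cnf m n) (lam : lit n) (x : GV r m n) : nat :=
  match x with
  | inl (inr l) => if l == lam then 0 else if l == negl lam then 1 else r.+1
  | inl (inl (i, k)) => if lam \in phi i then r - 1 else if negl lam \in phi i then r else r.+1
  | inr (i, p, k, t, s) =>
      if clause_lit phi i p == Some lam then s.+1
      else if clause_lit phi i p == Some (negl lam) then s.+2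
      else if lam \in phi i then minn r.+1 (r - 1 + (r - 2 - s)) else r.+1
  end.

Lemma fT_lip r m n (phi : cnf m n) lam (x y : GV r m n) : 3 <= r ->
  Garc r phi x y ->
  fT phi lam x <= (fT phi lam y).+1 /\ fT phi lam y <= (fT phi lam x).+1.
Proof.
move=> r3.
case: x => [[[i k]|[j b]]|[[[[i p] k] t] s]];
case: y => [[[i' k']|[j' b']]|[[[[i' p'] k'] t'] s']] //=.
- move=> /andP[/andP[/eqP e bt] bf]; subst j'; move: bt bf.
  case: b; case: b' => //= _ _.
  case: lam => jl bl; rewrite /negl /= !xpair_eqE.
  by case: (j == jl); case: bl.
- move=> /and3P[/eqP sr /eqP <- _].
  have ls := ltn_ord s.
  case: eqP => [/clause_lit_mem -> | _]; first lia.
  case: eqP => [/clause_lit_mem -> | _]; first by case: (lam \in phi i); lia.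
  by case: (lam \in phi i); case: (negl lam \in phi i); lia.
- move=> /andP[/eqP s0 /eqP cl].
  rewrite cl s0 !some_eq.
  have [e|ne1] := eqVneq (j', b') lam => /=; first lia.
  have [e|ne2] := eqVneq (j', b') (negl lam) => /=; first lia.
  case: (lam \in phi i); lia.
- move=> /and5P[/eqP <- /eqP <- _ _ /eqP ss].
  have ls := ltn_ord s'.
  case: eqP => _; first lia.
  case: eqP => _; first lia.
  case: (lam \in phi i); lia.
Qed.

Definition gA r m n (x : GV r m n) : option ('I_m * 'I_r * 'I_(2 * r) * bool) :=
  match x with inr (i, p, k, t, s) => Some (i, p, k, t) | _ => None end.

Definition gB r m n (x : GV r m n) : option ('I_m * 'I_(2 * r)) :=
  match x with inr (i, p, k, t, s) => Some (i, k) | inl (inl (i, k)) => Some (i, k) | _ => None end.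

Lemma gA_inv r m n (phi : cnf m n) a (x y : GV r m n) :
  lev a x <= 0 -> lev a y <= 0 -> Garc r phi x y -> gA x = gA y.
Proof.
case: x => [[[i k]|[j b]]|[[[[i p] k] t] s]];
case: y => [[[i' k']|[j' b']]|[[[[i' p'] k'] t'] s']] //=;
  try by case: (a _ == _).
by move=> _ _ /and5P[/eqP <- /eqP <- /eqP <- /eqP <- _].
Qed.

Lemma gB_inv r m n (phi : cnf m n) a (x y : GV r m n) :
  lev a x <= 1 -> lev a y <= 1 -> Garc r phi x y -> gB x = gB y.
Proof.
case: x => [[[i k]|[j b]]|[[[[i p] k] t] s]];
case: y => [[[i' k']|[j' b']]|[[[[i' p'] k'] t'] s']] //=;
  try by case: (a _ == _).
- by move=> _ _ /and3P[_ /eqP <- /eqP <-].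
- by move=> _ _ /and5P[/eqP <- _ /eqP <- _ _].
Qed.

Definition sq r m n (phi : cnf m n) (a : 'I_n -> bool) (u : GV r m n) : seq (GV r m n) :=
  match u with
  | inl (inl (i, k)) => [seq litv r m l | l <- phi i] ++
                        [seq litv r m (negl l) | l <- phi i & a l.1 != l.2]
  | inl (inr l) => [:: litv r m (negl l)]
  | inr (i, p, k, t, s) =>
      [seq (inr (i, p, k, t, s') : GV r m n) | s' <- enum 'I_(r - 2)] ++
      inl (inl (i, k)) :: [seq litv r m l | l <- phi i] ++
      [:: match clause_lit phi i p with Some l => litv r m (negl l) | None => u end]
  end.

Lemma adj_sym_lift r m n (phi : cnf m n) (R : pred (GV r m n)) (f : GV r m n -> nat) :
  (forall x y, R x -> R y -> Garc r phi x y -> f x <= (f y).+1 /\ f y <= (f x).+1) ->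
  forall x y, R x -> R y -> Gadj r phi x y -> f x <= (f y).+1.
Proof.
move=> H x y Rx Ry /orP[h|h]; first by case: (H x y Rx Ry h).
by case: (H y x Ry Rx h).
Qed.

Lemma adj_sym_inv r m n (phi : cnf m n) (T : eqType) (R : pred (GV r m n)) (g : GV r m n -> T) :
  (forall x y, R x -> R y -> Garc r phi x y -> g x = g y) ->
  forall x y, R x -> R y -> Gadj r phi x y -> g x = g y.
Proof.
move=> H x y Rx Ry /orP[h|h]; first exact: H.
by rewrite (H y x Ry Rx h).
Qed.

Lemma wreach_sub r m n (phi : cnf m n) a (o : GV r m n -> nat) u v :
  3 <= r -> (forall x y, o x < o y -> lev a x <= lev a y) ->
  v \in wreach (Gadj r phi) r o u -> v \in sq phi a u.
Proof.
move=> r3 mono.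
rewrite inE => /andP[ouv /existsP[k /existsP[p /and4P[pa /eqP lst _ al]]]].
have sz : size p <= r by rewrite size_tuple; have := ltn_ord k.
have Ru : lev a u <= lev a v := mono _ _ ouv.
have Rp : all (fun w => lev a w <= lev a v) p.
  apply/allP => w wp; move/allP: al => /(_ w wp) /orP[/orP[/eqP->|/eqP->]|/mono] //.
have nuv : u != v by apply: contraTneq ouv => ->; rewrite ltnn.
clear ouv al mono.
move: lst Ru Rp nuv.
case: v => [[[i k0]|[j b]]|[[[[i p0] k0] t] s]] lst Ru Rp nuv.
-
  have := inv_path (adj_sym_inv (@gB_inv r m n phi a)) Ru Rp pa.
  rewrite lst; clear lst pa Rp.
  move: Ru nuv; case: u => [[[i' k']|[j' b']]|[[[[i' p'] k'] t'] s']] //=.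
  + by move=> _ /eqP ne [e1 e2]; subst; case: ne.
  + move=> _ _ [-> ->]; by rewrite mem_cat in_cons eqxx orbT.
- case: (boolP (a j == b)) => ab.
  +
    have := @pot_path _ _ predT _ (adj_sym_lift (R := predT) (fun x y _ _ => @fT_lip r m n phi (j, b) x y r3)) p u erefl (all_predT _) pa.
    rewrite lst /= eqxx => fu; clear lst pa Rp.
    have fur : fT phi (j, b) u <= r := leq_trans fu sz.
    move: fur nuv; clear Ru fu; case: u => [[[i' k']|[j' b']]|[[[[i' p'] k'] t'] s']] //=.
    * case: ifP => [lin _ _|_]; first by rewrite mem_cat map_f.
      case: ifP => [nin _ _|_]; last lia.
      rewrite mem_cat; apply/orP; right; apply/mapP; exists (negl (j, b)); last by rewrite neglK.
      by rewrite mem_filter nin /= andbT; case: (b) ab => /eqP ->.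
    * case: ifP => [/eqP -> _|_]; first by rewrite eqxx.
      case: ifP => [/eqP -> _ _|_]; last lia.
      by rewrite neglK mem_head.
      move=> h _; rewrite mem_cat in_cons mem_cat; apply/orP; right; apply/orP; right.
      move: h; case: eqP => [/clause_lit_mem lin _|_]; first by rewrite map_f.
      case: eqP => [e _|_]; first by rewrite e neglK mem_head orbT.
      case: ifP => [lin _|_]; first by rewrite map_f.
      lia.
  +
    have R2 : forall w : GV r m n, lev a w <= lev a (inl (inr (j, b)) : GV r m n) -> lev a w <= 2.
      by move=> w; rewrite /= (negbTE ab).
    have := @pot_path _ _ (fun w => lev a w <= 2) _ (adj_sym_lift (fun x y hx hy => @fF_lip r m n phi a (j, b) x y r3 hx hy)) p u (R2 _ Ru) (sub_all R2 Rp) pa.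
    rewrite lst /= eqxx => fu; clear lst pa Rp.
    have fur : fF phi (j, b) u <= r := leq_trans fu sz.
    move: fur nuv; clear Ru fu; case: u => [[[i' k']|[j' b']]|[[[[i' p'] k'] t'] s']] //=.
    * by case: ifP => [lin _ _|_]; [rewrite mem_cat map_f | lia].
    * by case: ifP => [/eqP -> _|_]; [rewrite eqxx | lia].
    * move=> h _; rewrite mem_cat in_cons mem_cat; apply/orP; right; apply/orP; right.
      move: h; case: eqP => [/clause_lit_mem lin _|_]; first by rewrite map_f.
      case: ifP => [lin _|_]; first by rewrite map_f.
      lia.
-
  have R0 : forall w : GV r m n, lev a w <= lev a (inr (i, p0, k0, t, s) : GV r m n) -> lev a w <= 0 by [].
  have := inv_path (adj_sym_inv (@gA_inv r m n phi a)) (R0 _ Ru) (sub_all R0 Rp) pa.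
  rewrite lst; clear lst pa Rp.
  move: Ru nuv; case: u => [[[i' k']|[j' b']]|[[[[i' p'] k'] t'] s']] //=.
  + move=> _ _ [-> -> -> ->]; rewrite mem_cat; apply/orP; left.
    by apply/mapP; exists s; rewrite ?mem_enum.
Qed.

Lemma card_wreach r m n (phi : cnf m n) a (o : GV r m n -> nat) u :
  3 <= r -> exact_r_cnf r phi -> (forall i, has (fun l : lit n => a l.1 == l.2) (phi i)) ->
  (forall x y, o x < o y -> lev a x <= lev a y) ->
  #|wreach (Gadj r phi) r o u| <= 2 * r - 1.
Proof.
move=> r3 ex sat mono.
have sub : wreach (Gadj r phi) r o u \subset sq phi a u.
  by apply/subsetP => v; apply: wreach_sub.
have nu : u \notin wreach (Gadj r phi) r o u by rewrite inE ltnn.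
case: u sub nu => [[[i k]|l]|[[[[i p] k] t] s]] sub nu.
- apply: leq_trans (subset_leq_card sub) _; apply: leq_trans (card_size _) _.
  rewrite /= size_cat !size_map size_filter.
  have [sz _] := ex i.
  have := count_predC (fun l : lit n => a l.1 == l.2) (phi i).
  have := sat i; rewrite has_count.
  have -> : count (predC (fun l : lit n => a l.1 == l.2)) (phi i) = count (fun l : lit n => a l.1 != l.2) (phi i) by [].
  lia.
- apply: leq_trans (subset_leq_card sub) _; apply: leq_trans (card_size _) _.
  rewrite /=; lia.
- set S := sq phi a _ in sub.
  have pr : wreach (Gadj r phi) r o (inr (i, p, k, t, s)) \proper S.
    rewrite properE sub /=; apply/subsetPn; exists (inr (i, p, k, t, s)) => //.
    by rewrite mem_cat; apply/orP; left; apply/mapP; exists s; rewrite ?mem_enum.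
  have c := leq_trans (proper_card pr) (card_size S).
  have e : size S = 2 * r.
    rewrite /S /= size_cat size_map /= size_cat size_map /= size_enum_ord.
    have [-> _] := ex i. clear -r3; lia.
  rewrite e in c; rewrite -ltnS; apply: (leq_trans c); lia.
Qed.

Lemma bigmin_le_seq (I : eqType) (s : seq I) (P : pred I) (F : I -> nat) x0 j :
  j \in s -> P j -> \big[minn/x0]_(i <- s | P i) F i <= F j.
Proof.
move=> js Pj; elim: s js => //= x s IH.
rewrite big_cons in_cons => /orP[/eqP <-|js]; first by rewrite Pj geq_minl.
case: (P x); last exact: IH.
exact: leq_trans (geq_minr _ _) (IH js).
Qed.

Definition keyv r m n a (x : GV r m n) : nat := lev a x * #|GV r m n| + enum_rank x.

Lemma keyv_inj r m n a : injective (@keyv r m n a).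
Proof.
move=> x y e.
have h (z : GV r m n) : keyv a z %% #|GV r m n| = enum_rank z.
  by rewrite /keyv modnMDl modn_small.
apply: enum_rank_inj; apply: val_inj => /=.
by rewrite -h e h.
Qed.

Lemma keyv_mono r m n a (x y : GV r m n) : keyv a x < keyv a y -> lev a x <= lev a y.
Proof.
rewrite /keyv => h; rewrite leqNgt; apply/negP => lt.
have e1 : enum_rank x < #|GV r m n| := ltn_ord _.
have e2 : enum_rank y < #|GV r m n| := ltn_ord _.
have : (lev a y).+1 * #|GV r m n| <= lev a x * #|GV r m n| by rewrite leq_mul2r lt orbT.
rewrite mulSn. lia.
Qed.

Definition onat r m n a (x : GV r m n) : nat := #|[set y : GV r m n | keyv a y < keyv a x]|.

Lemma onat_lt r m n a (x : GV r m n) : onat a x < #|GV r m n|.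
Proof.
rewrite /onat -cardsT; apply: proper_card; rewrite properE subsetT /=.
by apply/subsetPn; exists x; rewrite ?inE ?ltnn.
Qed.

Lemma onat_mono r m n a (x y : GV r m n) : keyv a x < keyv a y -> onat a x < onat a y.
Proof.
move=> h; apply: proper_card; rewrite properE; apply/andP; split.
  by apply/subsetP => z; rewrite !inE => /ltn_trans; apply.
by apply/subsetPn; exists x; rewrite !inE ?ltnn.
Qed.

Lemma onat_refl r m n a (x y : GV r m n) : onat a x < onat a y -> keyv a x < keyv a y.
Proof.
move=> h; rewrite ltnNge; apply/negP => le.
have : onat a y <= onat a x.
  apply: subset_leq_card; apply/subsetP => z; rewrite !inE => /leq_trans; apply; exact: le.
lia.
Qed.

Unset Implicit Arguments.

Theorem lemma3p8 (r m n : nat) (phi : cnf m n) :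
  3 <= r -> exact_r_cnf r phi -> satisfiable phi ->
  wcol (Gadj r phi) r <= 2 * r - 1.
Proof.
move=> r3 ex [a sat].
pose ord : {ffun GV r m n -> 'I_#|GV r m n|} := [ffun x => Ordinal (onat_lt a x)].
have ordE x : nat_of_ord (ord x) = onat a x by rewrite ffunE.
have inj : injectiveb ord.
  apply/injectiveP => x y /(congr1 val) /=; rewrite !ordE => e.
  have [/onat_mono|/onat_mono|/keyv_inj] := ltngtP (keyv a x) (keyv a y) => //; lia.
apply: leq_trans (bigmin_le_seq _ _ (mem_index_enum ord) inj) _.
apply/bigmax_leqP => u _.
apply: card_wreach => // x y.
by rewrite !ordE => /onat_refl /keyv_mono.
Qed.
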